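(* For all integers $n\ge 0$ and $k=0,1,\dots,n$, $$Z^{n,k}(z,\bar z)=\frac{1}{k!}\,\frac{\partial^k}{\partial z^k}\Big[z^{n}\Big(\frac1z-\bar z\Big)^{k}\Big]=\frac{1}{k!}\,\frac{\partial^k}{\partial z^k}\Big[z^{n-k}(1-z\bar z)^{k}\Big],$$ where on the right $z$ and $\bar z$ are treated as independent variables (equivalently, $\partial/\partial z$ is the Wirtinger derivative).
   Context: Identify $\mathbb R^2$ with $\mathbb C$ via $z=x^1+ix^2$, $\bar z=x^1-ix^2$, and use $\frac{\partial}{\partial z}=\frac12\big(\frac{\partial}{\partial x^1}-i\frac{\partial}{\partial x^2}\big)$, $\frac{\partial}{\partial \bar z}=\frac12\big(\frac{\partial}{\partial x^1}+i\frac{\partial}{\partial x^2}\big)$. Zernike polynomials (in the paper's numbering) are defined for integers $n\ge 0$, $0\le k\le n$ by $$Z^{n,k}(z,\bar z)=\sum_{s=0}^{k}\binom{k}{s}\binom{n-k}{s}z^{n-k-s}(1-z\bar z)^s(-\bar z)^{k-s}\quad\text{for }0\le k\le [n/2],$$ and $Z^{n,k}=(-1)^n\,\overline{Z^{n,n-k}}$ for $[n/2]<k\le n$, where $[\cdot]$ is the integer part. (Equivalently $Z^{n,k}=(-1)^k V_{n,n-2k}$ with $V_{n,l}$ the classical Zernike polynomials.) Examples: $Z^{1,0}=z$, $Z^{1,1}=-\bar z$, $Z^{2,1}=1-2z\bar z$. *)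

(* Defs.v *)
From HB Require Import structures.
From mathcomp Require Import all_boot all_order all_algebra.
From mathcomp Require Import polyXY fraction.
Set Implicit Arguments. Unset Strict Implicit. Unset Printing Implicit Defensive.
Import Order.TTheory GRing.Theory Num.Theory.
Local Open Scope ring_scope.

(* Polynomials in two INDEPENDENT variables z and zbar over a numeric closed
   field R (e.g. algC, standing for the complex numbers):
   an element p : {poly {poly R}} is read as  sum_i p_i(zbar) z^i,
   i.e. the outer variable 'X is z and the inner variable 'Y := 'X%:P is zbar.
   The derivative d/dz is the formal derivative of the outer polynomial. *)

Definition zv (R : numClosedFieldType) : {poly {poly R}} := 'X.
Definition zbv (R : numClosedFieldType) : {poly {poly R}} := 'Y.

Definition conjXY (R : numClosedFieldType) (p : {poly {poly R}}) : {poly {poly R}} :=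
  swapXY (map_poly (map_poly (@Num.conj R)) p).

Definition Zern_term (R : numClosedFieldType) (n k s : nat) : {poly {poly R}} :=
  (zv R ^+ (n - k - s)%N * (1 - zv R * zbv R) ^+ s * (- zbv R) ^+ (k - s)%N)
    *+ ('C(k, s) * 'C(n - k, s))%N.

Definition Zern0 (R : numClosedFieldType) (n k : nat) : {poly {poly R}} :=
  \sum_(0 <= s < k.+1) Zern_term R n k s.

Definition Zern (R : numClosedFieldType) (n k : nat) : {poly {poly R}} :=
  if (k <= n./2)%N then Zern0 R n k
  else (-1) ^+ n * conjXY (Zern0 R n (n - k)%N).

Definition fracXY (R : numClosedFieldType) (p : {poly {poly R}})
  : {fraction {poly {poly R}}} := FracField.tofrac p.

(* Main.v *)
Require Import Defs.
From HB Require Import structures.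
From mathcomp Require Import all_boot all_order all_algebra.
From mathcomp Require Import polyXY fraction.
From mathcomp Require Import ring zify.
Import Order.TTheory GRing.Theory Num.Theory.
Local Open Scope ring_scope.

Lemma derivn_lin (S : comNzRingType) (c : S) k m :
 ((1 - 'X * c%:P)^+k)^`(m) = (((-c)^+m)%:P * (1 - 'X*c%:P)^+(k - m)) *+ k^_m.
Proof.
have hd : (1 - 'X * c%:P)^`() = (-c)%:P.
  by rewrite derivB mulrC deriv_mulC derivX mulr1 -polyC1 derivC sub0r polyCN.
elim: m => [|m IH]; first by rewrite derivn0 expr0 mul1r subn0 mulr1n.
rewrite derivnS IH derivMn derivM derivC mul0r add0r deriv_exp hd.
rewrite ffactnSr mulnC mulrnA subnS exprSr polyCM.
by rewrite mulrnAr mulrA.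
Qed.
Lemma leibniz (R : comNzRingType) (p q : {poly R}) k :
  (p * q)^`(k) = \sum_(i < k.+1) (p^`(k - i) * q^`(i)) *+ 'C(k, i).
Proof.
elim: k => [|k IH]; first by rewrite big_ord1 !derivn0 bin0 mulr1n.
rewrite derivnS IH (big_morph _ (@derivD _) (@deriv0 _)).
under eq_bigr => i _ do rewrite derivMn derivM mulrnDl.
rewrite big_split /= [RHS]big_ord_recl /=.
under [in RHS]eq_bigr => i _ do rewrite binS mulrnDr.
rewrite big_split /= addrA; congr (_ + _).
rewrite big_ord_recl [in RHS]big_ord_recr /=.
rewrite (bin_small (ltnSn k)) mulr0n addr0 subn0 !bin0; congr (_ + _).
apply: eq_bigr => i _ /=; rewrite -!derivnS subSS -subSn //.
Qed.

Lemma natid n k i : (i <= k)%N ->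
  (k ^_ (k - i) * (n - k) ^_ i * 'C(k, i) = 'C(k, i) * 'C(n - k, i) * k`!)%N.
Proof.
move=> hik; rewrite -!bin_ffact bin_sub // -(bin_fact hik); ring.
Qed.

Lemma deriv_main (R : numClosedFieldType) n k : (k <= n)%N ->
  ((k`!)%:R : R)^-1%:P%:P * (zv R ^+ (n - k)%N * (1 - zv R * zbv R) ^+ k)^`(k)
  = Zern0 R n k.
Proof.
move=> hkn; rewrite (mulrC (zv R ^+ _)) leibniz big_distrr /Zern0 big_mkord.
apply: eq_bigr => i _; have hik : (i <= k)%N by rewrite -ltnS.
rewrite /zv /zbv derivn_lin derivnXn subKn // /Zern_term /=.
rewrite mulrnAl mulrnAr -!mulrnA.
rewrite (_ : ((n - k) ^_ i * (k ^_ (k - i) * 'C(k, i)))%N = ('C(k, i) * 'C(n - k, i) * k`!)%N);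
  last by rewrite -natid //; ring.
rewrite mulrnA -[X in _ * X]mulr_natl mulrA (_ : (k`!%:R : {poly {poly R}}) = ((k`!%:R : R)%:P)%:P);
  last by rewrite !rmorph_nat.
rewrite -!rmorphM /= mulVf ?pnatr_eq0 -?lt0n ?fact_gt0 // mul1r.
rewrite /zv /zbv rmorphXn /= polyCN; congr (_ *+ _); ring.
Qed.

Lemma Zern_term0 (R : numClosedFieldType) n m s :
  ('C(m,s) * 'C(n-m,s))%N = 0%N -> Zern_term R n m s = 0.
Proof. by rewrite /Zern_term => ->; rewrite mulr0n. Qed.

Lemma Zern0_ext (R : numClosedFieldType) n m : (m <= n)%N ->
  Zern0 R n m = \sum_(0 <= s < n.+1) Zern_term R n m s.
Proof.
move=> hmn; rewrite /Zern0 (@big_cat_nat _ _ _ m.+1 0 n.+1) //=.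
rewrite [X in _ = _ + X](_ : _ = 0) ?addr0 //.
rewrite big_nat_cond; apply: big1 => s /andP[/andP[hs _] _].
by apply: Zern_term0; rewrite bin_small.
Qed.

Lemma conj_term (R : numClosedFieldType) n m s :
  conjXY (Zern_term R n m s) =
  ('Y ^+ (n - m - s) * (1 - 'Y * 'X) ^+ s * (- 'X) ^+ (m - s))
    *+ ('C(m, s) * 'C(n - m, s)).
Proof.
rewrite /conjXY /Zern_term /zv /zbv.
rewrite !(rmorphMn, rmorphM, rmorphXn, rmorphB, rmorph1, rmorphN) /=.
by rewrite map_polyX map_polyC /= map_polyX swapXY_X swapXY_Y.
Qed.

Lemma Zern_sym (R : numClosedFieldType) n k : (k <= n)%N ->
  (-1) ^+ n * conjXY (Zern0 R n (n - k)) = Zern0 R n k.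
Proof.
move=> hkn; rewrite !Zern0_ext ?leq_subr // /conjXY !rmorph_sum /= big_distrr.
apply: eq_bigr => s _ /=.
have [hs|hs] := boolP ('C(k, s) * 'C(n - k, s) == 0)%N.
  rewrite (@Zern_term0 R n k s) ?(eqP hs) // (@Zern_term0 R n (n - k) s).
    by rewrite !rmorph0 /= mulr0.
  by move: hs; rewrite subKn // mulnC => /eqP.
move: (hs); rewrite muln_eq0 negb_or -!lt0n !bin_gt0 => /andP[hsk hsnk].
have := conj_term R n (n - k) s; rewrite /conjXY => ->.
rewrite subKn // /Zern_term /zv /zbv (mulnC 'C(k, s)).
rewrite mulrnAr; congr (_ *+ _).
rewrite !(exprNn 'X) !(exprNn 'Y).
have e : ((-1) ^+ n : {poly {poly R}}) = (-1) ^+ (n - k - s) * (-1) ^+ (k - s).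
  have hn : n = ((n - k - s) + (k - s) + s * 2)%N by lia.
  rewrite {1}hn !exprD (mulnC s) exprM expr2 mulrNN mulr1 expr1n mulr1 //.
rewrite e; set b := (n - k - s)%N; set c := (k - s)%N.
have hb : ((-1) ^+ b : {poly {poly R}}) * (-1) ^+ b = 1.
  by rewrite -exprD addnn -mul2n exprM expr2 mulrNN mulr1 expr1n.
match goal with |- _ = ?r => transitivity ((-1) ^+ b * (-1) ^+ b * r) end.
  rewrite [in LHS](mulrC 'Y 'X).
  move: ((-1) ^+ b) ((-1) ^+ c) ('Y ^+ c) ('X^b) ((1 - 'X * 'Y) ^+ s) => u v w x y.
  have H : forall u v w x y : {poly {poly R}},
    u * v * (w * y * (u * x)) = u * u * (x * y * (v * w)) by move=> *; ring.
  exact: H.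
by rewrite hb mul1r.
Qed.

Lemma frac_part (R : numClosedFieldType) (n k : nat) : (k <= n)%N ->
  fracXY (zv R ^+ n) * ((fracXY (zv R))^-1 - fracXY (zbv R)) ^+ k
     = fracXY (zv R ^+ (n - k)%N * (1 - zv R * zbv R) ^+ k).
Proof.
move=> hkn; rewrite /fracXY.
have hX : FracField.tofrac (zv R) != 0 by rewrite tofrac_eq0 /zv polyX_eq0.
rewrite !(rmorphM, rmorphXn, rmorphB, rmorph1) /=.
rewrite -{1}(subnK hkn) exprD -mulrA -exprMn mulrBr mulfV //.
Qed.

Theorem theorem1 (R : numClosedFieldType) (n k : nat) :
  (k <= n)%N ->
  fracXY (zv R ^+ n) * ((fracXY (zv R))^-1 - fracXY (zbv R)) ^+ k
     = fracXY (zv R ^+ (n - k)%N * (1 - zv R * zbv R) ^+ k)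
  /\ Zern R n k
     = ((k`!)%:R : R)^-1%:P%:P * (zv R ^+ (n - k)%N * (1 - zv R * zbv R) ^+ k)^`(k).
Proof.
move=> hkn; split; first exact: frac_part.
rewrite deriv_main // /Zern; case: ifP => // _.
exact: Zern_sym.
Qed.
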